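(* Let $K\ge1$, $\beta_1\in(0,1)$, $\rho_1>0$, and let $\alpha_1\ge\cdots\ge\alpha_K>0$ be non-increasing. Define $\eta_1=\frac{\alpha_1}{1-\beta_1}$ if $\alpha_k=\alpha_1$ for all $k\in[K]$, and $\eta_1=\sum_{i=1}^K\alpha_i\beta_1^{i-1}$ otherwise; and for $2\le k\le K$ define recursively $$\eta_k=\frac{\eta_{k-1}-\alpha_{k-1}}{\beta_1},\qquad \rho_k=\frac{\rho_{k-1}}{\beta_1+\frac{\alpha_{k-1}}{\eta_k}}.$$ Then $\{\rho_j\}_{j=1}^K$ is non-increasing, $$\frac{\sum_{k=j-1}^t\alpha_k\beta_1^{k-(j-1)}}{\rho_{j-1}}-\frac{\sum_{k=j}^t\alpha_k\beta_1^{k-j}}{\rho_j}\ge 0\quad\text{for all }2\le j\le t\le K,$$ and $$\rho_j\le\frac{\rho_1\alpha_j}{\alpha_1(1-\beta_1)}\quad\text{for all }j\in[K].$$ Moreover, if $\alpha_j=\alpha_1$ for all $j\in[K]$, then $\eta_j=\frac{\alpha_1}{1-\beta_1}$ and $\rho_j=\rho_1$ for all $j\in[K]$.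
   Context: $[K]=\{1,\dots,K\}$. *)

(* Defs.v *)
(* R is an arbitrary real field. Sequences alpha are indexed by nat; only indices 1..K matter. *)
From mathcomp Require Import all_boot all_order all_algebra.
Set Implicit Arguments. Unset Strict Implicit. Unset Printing Implicit Defensive.
Import Order.TTheory GRing.Theory Num.Theory.
Local Open Scope ring_scope.

Section Defs.
Variables (R : realFieldType) (K : nat) (alpha : nat -> R) (beta1 rho1 : R).

Definition alpha_const : bool := [forall k : 'I_K, alpha k.+1 == alpha 1%N].

Definition eta1 : R :=
  if alpha_const then alpha 1%N / (1 - beta1)
  else \sum_(1 <= i < K.+1) alpha i * beta1 ^+ (i - 1).

(* eta_k for k >= 1 (value at 0 is irrelevant) *)
Fixpoint eta (k : nat) : R :=
  match k with
  | 0 => eta1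
  | 1 => eta1
  | k'.+1 => (eta k' - alpha k') / beta1
  end.

(* rho_k for k >= 1 (value at 0 is irrelevant) *)
Fixpoint rho (k : nat) : R :=
  match k with
  | 0 => rho1
  | 1 => rho1
  | k'.+1 => rho k' / (beta1 + alpha k' / eta k'.+1)
  end.
End Defs.

(* Main.v *)
Require Import Defs.
From mathcomp Require Import all_boot all_order all_algebra.
From mathcomp Require Import zify ring lra.
Import Order.TTheory GRing.Theory Num.Theory.
Local Open Scope ring_scope.

Ltac slia :=
  repeat match goal with
  | H : is_true (leq _ _) |- _ => revert H
  | H : is_true (andb (leq _ _) (leq _ _)) |- _ => revert H
  | H : @eq nat _ _ |- _ => revert H
  | H : _ |- _ => clear H
  end; lia.

Theorem lemma2 (R : realFieldType) (K : nat) (alpha : nat -> R) (beta1 rho1 : R)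
  (hK : (1 <= K)%N)
  (hb0 : 0 < beta1) (hb1 : beta1 < 1)
  (hrho : 0 < rho1)
  (hpos : forall k, (1 <= k <= K)%N -> 0 < alpha k)
  (hmono : forall i j, (1 <= i)%N -> (i <= j)%N -> (j <= K)%N -> alpha j <= alpha i) :
  (forall i j, (1 <= i)%N -> (i <= j)%N -> (j <= K)%N ->
     rho K alpha beta1 rho1 j <= rho K alpha beta1 rho1 i)
  /\ (forall j t, (2 <= j)%N -> (j <= t)%N -> (t <= K)%N ->
     0 <= (\sum_(j.-1 <= k < t.+1) alpha k * beta1 ^+ (k - j.-1)) / rho K alpha beta1 rho1 j.-1
          - (\sum_(j <= k < t.+1) alpha k * beta1 ^+ (k - j)) / rho K alpha beta1 rho1 j)
  /\ (forall j, (1 <= j <= K)%N ->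
     rho K alpha beta1 rho1 j <= rho1 * alpha j / (alpha 1%N * (1 - beta1)))
  /\ ((forall j, (1 <= j <= K)%N -> alpha j = alpha 1%N) ->
      forall j, (1 <= j <= K)%N ->
        eta K alpha beta1 j = alpha 1%N / (1 - beta1) /\ rho K alpha beta1 rho1 j = rho1).
Proof.
set e := eta K alpha beta1.
set r := rho K alpha beta1 rho1.
have bne : beta1 != 0 by rewrite gt_eqF.
have b1ne : 1 - beta1 != 0 by rewrite subr_eq0 eq_sym lt_eqF.
have b1pos : 0 < 1 - beta1 by rewrite subr_gt0.
have hR : forall j, (1 <= j)%N -> e j = alpha j + beta1 * e j.+1.
  case=> [//|j] _.
  have -> : e j.+2 = (e j.+1 - alpha j.+1) / beta1 by [].
  by field.
have he1 : e 1%N = eta1 K alpha beta1 by [].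
have hE : 0 <= e K.+1 /\ e K.+1 <= alpha K / (1 - beta1).
  case hc: (alpha_const K alpha).
    have hal : forall k, (1 <= k <= K)%N -> alpha k = alpha 1%N.
      case=> [//|k] /andP [_ hk].
      by move/forallP: hc => /(_ (Ordinal hk)) /eqP.
    have hec : forall j, (1 <= j <= K.+1)%N -> e j = alpha 1%N / (1 - beta1).
      elim=> [//|j IH] /andP [_ hj].
      case: j IH hj => [|j] IH hj.
        by rewrite he1 /eta1 hc.
      have -> : e j.+2 = (e j.+1 - alpha j.+1) / beta1 by [].
      rewrite IH; last by rewrite /= ltnW.
      rewrite hal; last by rewrite /= -ltnS.
      by field; rewrite b1ne bne.
    rewrite hec ?hK ?leqnn // -(hal K) ?hK ?leqnn //.
    split; last by [].
    by rewrite divr_ge0 // ?ltW // hpos // hK leqnn.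
  have hup : forall j, (1 <= j)%N ->
      beta1 ^+ j.-1 * e j = e 1%N - \sum_(1 <= i < j) alpha i * beta1 ^+ i.-1.
    elim=> [//|j IH] _.
    case: j IH => [|j] IH.
      by rewrite big_geq // expr0 mul1r subr0.
    rewrite big_nat_recr //= opprD addrA -IH // (hR j.+1) //= exprS.
    ring.
  have := hup K.+1 isT.
  rewrite he1 /eta1 hc /=.
  have -> : \sum_(1 <= i < K.+1) alpha i * beta1 ^+ i.-1
          = \sum_(1 <= i < K.+1) alpha i * beta1 ^+ (i - 1).
    by apply: eq_bigr => i _; rewrite subn1.
  rewrite subrr => /eqP; rewrite mulf_eq0 expf_eq0 (negbTE bne) andbF /= => /eqP ->.
  by rewrite lexx divr_ge0 // ?ltW // hpos // hK leqnn.
case: hE => hE0 hE1.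
have hNn : forall j, (1 <= j <= K.+1)%N -> 0 <= e j.
  suff H : forall d j, (j + d = K.+1)%N -> (1 <= j)%N -> 0 <= e j.
    move=> j /andP [h1 h2]; apply: (H (K.+1 - j)%N) => //; slia.
  elim=> [|d IH] j hjd hj.
    by rewrite addn0 in hjd; rewrite hjd.
  rewrite hR //; apply: addr_ge0.
    by apply/ltW/hpos; slia.
  by apply: mulr_ge0; [exact: ltW | apply: IH => //; slia].
have hUb : forall j, (1 <= j <= K)%N -> e j <= alpha j / (1 - beta1).
  suff H : forall d j, (j + d = K)%N -> (1 <= j)%N -> e j <= alpha j / (1 - beta1).
    move=> j /andP [h1 h2]; apply: (H (K - j)%N) => //; slia.
  elim=> [|d IH] j hjd hj.
    rewrite addn0 in hjd; subst j.
    rewrite hR // ler_pdivlMr //.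
    have : e K.+1 * (1 - beta1) <= alpha K by rewrite -ler_pdivlMr.
    move=> h; nra.
  rewrite hR //.
  have h1 : e j.+1 <= alpha j.+1 / (1 - beta1) by apply: IH => //; slia.
  have h2 : alpha j.+1 <= alpha j by apply: hmono => //; slia.
  have h3 : e j.+1 * (1 - beta1) <= alpha j by rewrite -ler_pdivlMr // (le_trans h1) // ler_pM2r ?invr_gt0.
  rewrite ler_pdivlMr //; nra.
have hPos : forall j, (1 <= j <= K)%N -> 0 < e j.
  move=> j /andP [h1 h2]; rewrite hR //.
  have ha : 0 < alpha j by apply: hpos; slia.
  have hb : 0 <= beta1 * e j.+1 by apply: mulr_ge0; [exact: ltW | apply: hNn; slia].
  lra.
have hMono : forall j, (1 <= j)%N -> (j < K)%N -> e j.+1 <= e j.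
  move=> j h1 h2; rewrite (hR j) //.
  have h3 : e j.+1 * (1 - beta1) <= alpha j.
    rewrite -ler_pdivlMr //; apply: (le_trans (hUb j.+1 _)); first slia.
    by rewrite ler_pM2r ?invr_gt0 //; apply: hmono => //; slia.
  nra.
have hLb : alpha 1%N <= e 1%N.
  rewrite hR //; have : 0 <= e 2 by apply: hNn; slia.
  move=> h; have : 0 <= beta1 * e 2 by apply: mulr_ge0 => //; exact: ltW.
  lra.
have hsplit : forall m n, (m <= n)%N ->
    \sum_(m <= k < n.+1) alpha k * beta1 ^+ (k - m)
    = alpha m + beta1 * \sum_(m.+1 <= k < n.+1) alpha k * beta1 ^+ (k - m.+1).
  move=> m n hmn; rewrite big_ltn ?ltnS // subnn expr0 mulr1; congr (_ + _).
  rewrite big_distrr /=; apply: eq_big_nat => k /andP [hk1 hk2].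
  have -> : (k - m = (k - m.+1).+1)%N by slia.
  by rewrite exprS; ring.
have hT : forall t j, (t <= K)%N -> (1 <= j)%N -> (j <= t.+1)%N ->
    \sum_(j <= k < t.+1) alpha k * beta1 ^+ (k - j) <= e j.
  move=> t.
  suff H : forall d j, (j + d = t.+1)%N -> (1 <= j)%N -> (t <= K)%N ->
      \sum_(j <= k < t.+1) alpha k * beta1 ^+ (k - j) <= e j.
    move=> j h1 h2 h3; apply: (H (t.+1 - j)%N) => //; slia.
  elim=> [|d IH] j hjd hj ht.
    rewrite addn0 in hjd; rewrite big_geq; last by slia.
    by apply: hNn; slia.
  rewrite hsplit; last by slia.
  rewrite (hR j) // lerD2l ler_pM2l //.
  by apply: IH => //; slia.
have hrcf : forall k, (1 <= k <= K)%N -> r k = rho1 * e k / e 1%N.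
  have e1ne : e 1%N != 0 by rewrite gt_eqF // hPos // hK.
  elim=> [//|k IH] /andP [_ hk].
  case: k IH hk => [|k] IH hk.
    by rewrite /r /=; field; rewrite e1ne.
  have -> : r k.+2 = r k.+1 / (beta1 + alpha k.+1 / e k.+2) by [].
  have e2ne : e k.+2 != 0 by rewrite gt_eqF // hPos.
  rewrite IH; last by slia.
  rewrite (hR k.+1) //.
  have hne : beta1 * e k.+2 + alpha k.+1 != 0.
    have ha : 0 < alpha k.+1 by apply: hpos; slia.
    have hb : 0 < beta1 * e k.+2 by apply: mulr_gt0 => //; apply: hPos.
    rewrite gt_eqF //; lra.
  by field; rewrite ?e1ne ?e2ne ?hne ?bne ?b1ne ?(addrC (alpha _)).
have e1pos : 0 < e 1%N by rewrite hPos // hK.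
have a1pos : 0 < alpha 1%N by rewrite hpos // hK.
split.
  move=> i j hi hij hjK.
  have hej : e j <= e i.
    move: hij; rewrite leq_eqVlt => /orP [/eqP -> //|].
    elim: j hjK => [//|j IH] hjK hij.
    rewrite ltnS leq_eqVlt in hij; case/orP: hij => [/eqP hij|hij].
      by subst i; apply: hMono => //; slia.
    apply: le_trans (IH _ hij); last by slia.
    by apply: hMono; slia.
  rewrite !hrcf; try slia.
  by rewrite ler_pM2r ?invr_gt0 // ler_pM2l.
split.
  move=> [|[|j]] t // _ hjt htK; change (j.+2).-1 with j.+1.
  rewrite (hsplit j.+1 t); last by slia.
  set B := \sum_(j.+2 <= k < t.+1) _.
  have hB : B <= e j.+2 by apply: hT; slia.
  rewrite !hrcf; try slia.
  rewrite (hR j.+1) //.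
  have e2pos : 0 < e j.+2 by apply: hPos; slia.
  have hapos : 0 < alpha j.+1 by apply: hpos; slia.
  have hden : 0 < alpha j.+1 + beta1 * e j.+2 by have := mulr_gt0 hb0 e2pos; lra.
  have -> : (alpha j.+1 + beta1 * B) / (rho1 * (alpha j.+1 + beta1 * e j.+2) / e 1%N) -
      B / (rho1 * e j.+2 / e 1%N)
      = alpha j.+1 * (e j.+2 - B) * e 1%N / (rho1 * (alpha j.+1 + beta1 * e j.+2) * e j.+2).
    field; rewrite ?gt_eqF //.
  apply: divr_ge0; last by apply/ltW/mulr_gt0 => //; apply: mulr_gt0.
  apply: mulr_ge0; last exact: ltW.
  by apply: mulr_ge0; [exact: ltW | rewrite subr_ge0].
split.
  move=> j hj; rewrite hrcf // -subr_ge0.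
  have hu : e j * (1 - beta1) <= alpha j by rewrite -ler_pdivlMr // hUb.
  have hu0 : 0 <= e j * (1 - beta1) by apply: mulr_ge0; [exact/ltW/hPos | exact: ltW].
  have -> : rho1 * alpha j / (alpha 1%N * (1 - beta1)) - rho1 * e j / e 1%N
      = rho1 * (alpha j * e 1%N - e j * (1 - beta1) * alpha 1%N) / (e 1%N * alpha 1%N * (1 - beta1)).
    field; rewrite ?gt_eqF //.
  apply: divr_ge0; last by apply/ltW/mulr_gt0 => //; apply: mulr_gt0.
  apply: mulr_ge0; first exact: ltW.
  rewrite subr_ge0; apply: (@le_trans _ _ (e j * (1 - beta1) * e 1%N)).
    by apply: ler_wpM2l.
  by apply: ler_wpM2r => //; exact: ltW.
move=> hal.
have hc : alpha_const K alpha = true.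
  apply/forallP => k; apply/eqP; apply: hal; have := ltn_ord k; slia.
have hec : forall j, (1 <= j <= K.+1)%N -> e j = alpha 1%N / (1 - beta1).
  elim=> [//|j IH] /andP [_ hj].
  case: j IH hj => [|j] IH hj.
    by rewrite he1 /eta1 hc.
  have -> : e j.+2 = (e j.+1 - alpha j.+1) / beta1 by [].
  rewrite IH; last by rewrite /= ltnW.
  rewrite hal; last by rewrite /= -ltnS.
  by field; rewrite b1ne bne.
move=> j hj; split; first by apply: hec; slia.
rewrite hrcf // !hec; try slia.
field; rewrite ?gt_eqF // divr_gt0 //.
Qed.
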